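(* Let $\mathbf{u}=(u_n)$ be an a-sequence whose sequence of ratios $(q_n)$ is unbounded. Then $s_\mathbf{u}(\mathbb{T})=\{x\in\mathbb{T}: u_nx\to0\text{ in }\mathbb{T}\}$ is not an $F_\sigma$-subset of $\mathbb{T}$.
   Context: An a-sequence is a strictly increasing sequence of integers $\mathbf{u}=(u_n)_{n\in\mathbb{N}}$ with $u_n\mid u_{n+1}$ for all $n$; its ratios are $q_0=u_0$ and $q_n=u_n/u_{n-1}$ for $n>0$. $\mathbb{T}=\mathbb{R}/\mathbb{Z}$ with its usual compact topology. *)

(* Defs.v *)
From Stdlib Require Import Reals Lra Lia Arith.
Open Scope R_scope.

Definition a_sequence (u : nat -> nat) : Prop :=
  (forall n, (u n < u (S n))%nat) /\ (forall n, Nat.divide (u n) (u (S n))).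

Definition ratio (u : nat -> nat) (n : nat) : nat :=
  match n with
  | O => u O
  | S m => (u (S m) / u m)%nat
  end.

(* The circle group T = R/Z, represented by the fundamental domain [0,1). *)
Definition Tpt := { x : R | 0 <= x < 1 }.

(* fractional part t - floor t, in [0,1) *)
Definition frac (t : R) : R := t - (IZR (up t) - 1).

(* distance to the nearest integer: the norm of t mod Z in T *)
Definition tnorm (t : R) : R := Rmin (frac t) (1 - frac t).

Definition Tdist (x y : Tpt) : R := tnorm (proj1_sig x - proj1_sig y).

(* closed subsets of T (T is the metric space with the quotient metric,
   which induces its usual compact topology) *)
Definition T_closed (A : Tpt -> Prop) : Prop :=
  forall x : Tpt,
    (forall eps, 0 < eps -> exists y : Tpt, A y /\ Tdist x y < eps) -> A x.

Definition T_Fsigma (A : Tpt -> Prop) : Prop :=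
  exists F : nat -> (Tpt -> Prop),
    (forall k, T_closed (F k)) /\
    (forall x, A x <-> exists k, F k x).

Definition s_u (u : nat -> nat) (x : Tpt) : Prop :=
  forall eps, 0 < eps -> exists N, forall n, (N <= n)%nat ->
    tnorm (INR (u n) * proj1_sig x) < eps.

(* Main.v *)
Require Import Defs.
From Stdlib Require Import Reals Lra Lia ClassicalEpsilon Classical ZArith Arith.
Open Scope R_scope.

Lemma u_pos (u : nat -> nat) : a_sequence u -> forall n, (1 <= u n)%nat.
Proof.
  intros [Hi Hd] n. induction n.
  - destruct (u 0%nat) eqn:E; [|lia]. exfalso. destruct (Hd 0%nat) as [c Hc].
    rewrite E in Hc. specialize (Hi 0%nat). lia.
  - specialize (Hi n). lia.
Qed.

Lemma u_mono (u : nat -> nat) : a_sequence u -> forall m n, (m <= n)%nat -> (u m <= u n)%nat.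
Proof.
  intros [Hi Hd] m n H. induction H; auto. specialize (Hi m0). lia.
Qed.

Lemma u_ge (u : nat -> nat) : a_sequence u -> forall n, (n < u n)%nat.
Proof.
  intros Ha n. induction n.
  - pose proof (u_pos u Ha 0). lia.
  - destruct Ha as [Hi _]. specialize (Hi n). lia.
Qed.

Lemma u_dvd (u : nat -> nat) : a_sequence u -> forall m n, (m <= n)%nat -> Nat.divide (u m) (u n).
Proof.
  intros [Hi Hd] m n H. induction H. apply Nat.divide_refl.
  eapply Nat.divide_trans; eauto.
Qed.

Lemma u_double (u : nat -> nat) : a_sequence u -> forall n, (2 * u n <= u (S n))%nat.
Proof.
  intros Ha n. pose proof (u_pos u Ha n). destruct Ha as [Hi Hd].
  destruct (Hd n) as [c Hc]. specialize (Hi n). rewrite Hc in *.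
  destruct c as [|[|c]]; nia.
Qed.

Lemma u_exact (u : nat -> nat) : a_sequence u -> forall n,
  u (S n) = (u (S n) / u n * u n)%nat.
Proof.
  intros Ha n. pose proof (u_pos u Ha n). destruct Ha as [Hi Hd].
  destruct (Hd n) as [c Hc]. rewrite Hc. rewrite Nat.div_mul; lia.
Qed.

Lemma ratio_le (u : nat -> nat) : a_sequence u -> forall L n, (n <= L)%nat -> (ratio u n <= u L)%nat.
Proof.
  intros Ha L n H. destruct n; simpl.
  - apply u_mono; auto.
  - apply Nat.le_trans with (u (S n)); [|apply u_mono; auto].
    apply Nat.Div0.div_le_upper_bound. pose proof (u_pos u Ha n). nia.
Qed.

Lemma big_ratio (u : nat -> nat) : a_sequence u ->
  (forall M : nat, exists n : nat, (M < ratio u n)%nat) ->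
  forall L K, exists p, (L <= p)%nat /\ (K <= u (S p) / u p)%nat.
Proof.
  intros Ha Hu L K. destruct (Hu (u L + K)%nat) as [n Hn].
  destruct (Compare_dec.le_lt_dec n L) as [H|H].
  - pose proof (ratio_le u Ha L n H). lia.
  - destruct n as [|p]; [lia|]. exists p. split; [lia|]. simpl in Hn. lia.
Qed.

Lemma tnorm_shift z t : tnorm (IZR z + t) = tnorm t.
Proof.
  unfold tnorm, frac. destruct (archimed t) as [H1 H2].
  assert (E : up (IZR z + t) = (z + up t)%Z).
  { symmetry. apply tech_up; rewrite plus_IZR; lra. }
  rewrite E, plus_IZR.
  replace (IZR z + t - (IZR z + IZR (up t) - 1)) with (t - (IZR (up t) - 1)) by ring.
  reflexivity.
Qed.

Lemma tnorm_abs t : tnorm t <= Rabs t.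
Proof.
  unfold tnorm, frac. destruct (archimed t) as [H1 H2].
  destruct (Z_le_gt_dec (up t) 0) as [H|H].
  - apply IZR_le in H. eapply Rle_trans; [apply Rmin_r|].
    unfold Rabs; destruct (Rcase_abs t); lra.
  - assert (H' : (1 <= up t)%Z) by lia. apply IZR_le in H'.
    eapply Rle_trans; [apply Rmin_l|].
    unfold Rabs; destruct (Rcase_abs t); lra.
Qed.

Lemma tnorm_small t : 0 <= t <= 1/2 -> tnorm t = t.
Proof.
  intros H. unfold tnorm, frac.
  assert (E : up t = 1%Z) by (symmetry; apply tech_up; simpl; lra).
  rewrite E. simpl. rewrite Rmin_left; lra.
Qed.

Definition nxt (u : nat -> nat) (L k : nat) : nat :=
  epsilon (inhabits 0%nat) (fun p => (L <= p)%nat /\ (8*(k+1) <= u (S p) / u p)%nat).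

Fixpoint pidx (u : nat -> nat) (g : nat -> nat) (i : nat) : nat :=
  match i with O => nxt u 0 (g 0%nat) | S i' => nxt u (S (S (pidx u g i'))) (g i) end.

Definition qq u g i := (u (S (pidx u g i)) / u (pidx u g i))%nat.
Definition dig u g i := (qq u g i / (4 * (g i + 1)))%nat.
Definition rr u g i := INR (dig u g i) / INR (qq u g i).

Fixpoint PS u g (j : nat) : R :=
  match j with O => 0 | S j' => PS u g j' + INR (dig u g j') / INR (u (S (pidx u g j'))) end.

Section Dig.
Context (u : nat -> nat) (Ha : a_sequence u)
  (Hu : forall M : nat, exists n : nat, (M < ratio u n)%nat).

Lemma nxt_spec L k : (L <= nxt u L k)%nat /\ (8*(k+1) <= u (S (nxt u L k)) / u (nxt u L k))%nat.
Proof. unfold nxt. apply epsilon_spec. apply big_ratio; auto. Qed.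

Lemma pidx_step g i : (pidx u g i + 2 <= pidx u g (S i))%nat.
Proof. simpl. pose proof (nxt_spec (S (S (pidx u g i))) (g (S i))). lia. Qed.

Lemma pidx_mono g i j : (i <= j)%nat -> (pidx u g i <= pidx u g j)%nat.
Proof. intros H; induction H; auto. pose proof (pidx_step g m). lia. Qed.

Lemma pidx_ge g i : (i <= pidx u g i)%nat.
Proof. induction i; [lia|]. pose proof (pidx_step g i). lia. Qed.

Lemma qq_big g i : (8 * (g i + 1) <= qq u g i)%nat.
Proof. unfold qq. destruct i; simpl; apply nxt_spec. Qed.

Lemma term_eq g i : INR (dig u g i) / INR (u (S (pidx u g i))) = rr u g i / INR (u (pidx u g i)).
Proof.
  unfold rr. rewrite (u_exact u Ha (pidx u g i)) at 1. fold (qq u g i).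
  rewrite mult_INR. pose proof (u_pos u Ha (pidx u g i)). pose proof (qq_big g i).
  assert (0 < INR (qq u g i)) by (apply lt_0_INR; lia).
  assert (0 < INR (u (pidx u g i))) by (apply lt_0_INR; lia).
  field. lra.
Qed.

Lemma div_le_inv d q K : 0 < q -> 0 < K -> K * d <= q -> d / q <= / K.
Proof.
  intros Hq HK H. apply Rmult_le_reg_l with K; auto. rewrite Rinv_r by lra.
  replace (K*(d/q)) with ((K*d)*/q) by (field; lra). apply Rmult_le_reg_r with q; auto.
  rewrite Rmult_assoc, Rinv_l, Rmult_1_r, Rmult_1_l by lra. exact H.
Qed.

Lemma inv_le_div d q K : 0 < q -> 0 < K -> q <= K * d -> / K <= d / q.
Proof.
  intros Hq HK H. apply Rmult_le_reg_l with K; auto. rewrite Rinv_r by lra.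
  replace (K*(d/q)) with ((K*d)*/q) by (field; lra). apply Rmult_le_reg_r with q; auto.
  rewrite Rmult_assoc, Rinv_l, Rmult_1_r, Rmult_1_l by lra. exact H.
Qed.

Lemma rr_upper g i : rr u g i <= / (4 * (INR (g i) + 1)).
Proof.
  unfold rr, dig. pose proof (qq_big g i). set (q := qq u g i) in *.
  set (K := (4 * (g i + 1))%nat).
  assert (HK : (K * (q / K) <= q)%nat) by (apply Nat.Div0.mul_div_le).
  apply le_INR in HK. rewrite mult_INR in HK.
  assert (HKr : INR K = 4 * (INR (g i) + 1)) by (unfold K; rewrite mult_INR, plus_INR; simpl; ring).
  try rewrite HKr in HK; try rewrite HKr in HK2.
  assert (0 < INR q) by (apply lt_0_INR; lia).
  assert (0 < INR (g i) + 1) by (pose proof (pos_INR (g i)); lra).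
  apply div_le_inv; lra.
Qed.

Lemma rr_lower g i : / (8 * (INR (g i) + 1)) <= rr u g i.
Proof.
  unfold rr, dig. pose proof (qq_big g i). set (q := qq u g i) in *.
  set (K := (4 * (g i + 1))%nat).
  assert (HK : (q < K * (q / K) + K)%nat).
  { pose proof (Nat.div_mod q K). pose proof (Nat.mod_upper_bound q K). unfold K in *. lia. }
  assert (HK2 : (q <= 2 * K * (q / K))%nat) by (unfold K in *; nia).
  apply le_INR in HK2. rewrite !mult_INR in HK2.
  assert (HKr : INR K = 4 * (INR (g i) + 1)) by (unfold K; rewrite mult_INR, plus_INR; simpl; ring).
  try rewrite HKr in HK; try rewrite HKr in HK2.
  assert (0 < INR q) by (apply lt_0_INR; lia).
  assert (0 < INR (g i) + 1) by (pose proof (pos_INR (g i)); lra).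
  simpl in HK2. apply inv_le_div; lra.
Qed.

Lemma rr_nonneg g i : 0 <= rr u g i.
Proof. eapply Rle_trans; [|apply rr_lower]. left. apply Rinv_0_lt_compat. pose proof (pos_INR (g i)); lra. Qed.

Lemma PS_incr g j : PS u g j <= PS u g (S j).
Proof.
  simpl. rewrite term_eq. pose proof (rr_nonneg g j). pose proof (u_pos u Ha (pidx u g j)).
  assert (0 < INR (u (pidx u g j))) by (apply lt_0_INR; lia).
  assert (0 <= rr u g j / INR (u (pidx u g j))) by (unfold Rdiv; apply Rmult_le_pos; [lra| left; apply Rinv_0_lt_compat; lra]). lra.
Qed.

Lemma PS_mono g i j : (i <= j)%nat -> PS u g i <= PS u g j.
Proof. intros H; induction H; [lra|]. pose proof (PS_incr g m); lra. Qed.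

Lemma u_p4 g i : 4 * INR (u (pidx u g i)) <= INR (u (pidx u g (S i))).
Proof.
  pose proof (pidx_step g i). set (p := pidx u g i) in *.
  pose proof (u_double u Ha p). pose proof (u_double u Ha (S p)).
  pose proof (u_mono u Ha (S (S p)) (pidx u g (S i)) ltac:(lia)).
  replace 4 with (INR 4) by (simpl; lra). rewrite <- mult_INR. apply le_INR. lia.
Qed.

Lemma key g delta : forall d i, (forall j, (i <= j)%nat -> rr u g j <= delta) ->
  INR (u (pidx u g i)) * (PS u g (i + d) - PS u g i) <= 2 * delta.
Proof.
  induction d; intros i Hr.
  - rewrite Nat.add_0_r. pose proof (rr_nonneg g i). specialize (Hr i (le_n _)). nra.
  - replace (i + S d)%nat with (S i + d)%nat by lia.
    assert (IH := IHd (S i) ltac:(intros j Hj; apply Hr; lia)).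
    pose proof (PS_mono g (S i) (S i + d) ltac:(lia)).
    pose proof (u_p4 g i). specialize (Hr i (le_n _)).
    set (U := INR (u (pidx u g i))) in *. set (U' := INR (u (pidx u g (S i)))) in *.
    set (A := PS u g (S i + d) - PS u g (S i)) in *.
    assert (E : PS u g (S i + d) - PS u g i = rr u g i / U + A).
    { assert (E0 : PS u g (S i) = PS u g i + rr u g i / U) by (unfold U; simpl; rewrite term_eq; ring).
      unfold A. rewrite E0. ring. }
    rewrite E. pose proof (u_pos u Ha (pidx u g i)).
    assert (0 < U) by (unfold U; apply lt_0_INR; lia).
    replace (U * (rr u g i / U + A)) with (rr u g i + U * A) by (field; lra).
    assert (0 <= A) by (unfold A; lra).
    assert (U * A * 4 <= U' * A) by nra. nra.
Qed.


Lemma rr_le_k g j k : (k <= g j)%nat -> rr u g j <= / (4 * (INR k + 1)).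
Proof.
  intros H. eapply Rle_trans; [apply rr_upper|]. apply le_INR in H.
  pose proof (pos_INR k). apply Rinv_le_contravar; lra.
Qed.

Lemma rr_le_quarter g j : rr u g j <= 1/4.
Proof. eapply Rle_trans; [apply (rr_le_k g j 0); lia|]. simpl. lra. Qed.

Lemma U_pos g i : 1 <= INR (u (pidx u g i)).
Proof. replace 1 with (INR 1) by reflexivity. apply le_INR. apply u_pos; auto. Qed.

Lemma PS_nonneg g j : 0 <= PS u g j.
Proof. pose proof (PS_mono g 0 j ltac:(lia)). simpl in H. lra. Qed.

Lemma PS_bound g j : PS u g j <= 1/2.
Proof.
  pose proof (key g (1/4) j 0 (fun j _ => rr_le_quarter g j)) as H.
  rewrite Nat.add_0_l in H. change (PS u g 0) with 0 in H.
  pose proof (U_pos g 0). pose proof (PS_nonneg g j). rewrite Rminus_0_r in H.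
  set (U := INR (u (pidx u g 0))) in *. assert ((U - 1) * PS u g j >= 0) by nra. nra.
Qed.

Definition EPS g := fun y => exists j, y = PS u g j.

Lemma EPS_bound g : bound (EPS g).
Proof. exists (1/2). intros y [j ->]. apply PS_bound. Qed.

Lemma EPS_ne g : exists y, EPS g y.
Proof. exists (PS u g 0). exists 0%nat. reflexivity. Qed.

Definition xval g : R := proj1_sig (completeness (EPS g) (EPS_bound g) (EPS_ne g)).

Lemma xval_ge g j : PS u g j <= xval g.
Proof.
  unfold xval. destruct (completeness _ _ _) as [m Hm]. simpl. destruct Hm as [Hm _]. apply Hm. exists j. reflexivity.
Qed.

Lemma xval_le g B : (forall j, PS u g j <= B) -> xval g <= B.
Proof.
  intros H. unfold xval. destruct (completeness _ _ _) as [m Hm]. simpl. destruct Hm as [_ Hm]. apply Hm.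
  intros y [j ->]. apply H.
Qed.

Lemma tail_upper g i delta : (forall j, (i <= j)%nat -> rr u g j <= delta) -> 0 <= delta ->
  INR (u (pidx u g i)) * (xval g - PS u g i) <= 2 * delta.
Proof.
  intros Hr Hd. pose proof (U_pos g i). set (U := INR (u (pidx u g i))) in *.
  assert (xval g <= PS u g i + 2 * delta / U).
  { apply xval_le. intros j. destruct (Compare_dec.le_lt_dec i j) as [Hij|Hij].
    - pose proof (key g delta (j - i) i Hr). replace (i + (j - i))%nat with j in H0 by lia.
      fold U in H0. apply Rmult_le_reg_l with U; [lra|].
      replace (U * (PS u g i + 2 * delta / U)) with (U * PS u g i + 2 * delta) by (field; lra). nra.
    - pose proof (PS_mono g j i ltac:(lia)).
      assert (0 <= 2 * delta / U) by (unfold Rdiv; apply Rmult_le_pos; [lra| left; apply Rinv_0_lt_compat; lra]). lra. }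
  apply Rmult_le_reg_l with (/ U). apply Rinv_0_lt_compat; lra.
  replace (/ U * (U * (xval g - PS u g i))) with (xval g - PS u g i) by (field; lra).
  replace (/ U * (2 * delta)) with (2 * delta / U) by (field; lra). lra.
Qed.

Lemma tail_lower g i : rr u g i <= INR (u (pidx u g i)) * (xval g - PS u g i).
Proof.
  pose proof (xval_ge g (S i)). simpl in H. rewrite term_eq in H.
  pose proof (U_pos g i). set (U := INR (u (pidx u g i))) in *.
  replace (rr u g i) with (U * (rr u g i / U)) by (field; lra). apply Rmult_le_compat_l; lra.
Qed.

Lemma PS_int g n : forall i, (forall j, (j < i)%nat -> (S (pidx u g j) <= n)%nat) ->
  exists z, INR (u n) * PS u g i = IZR z.
Proof.
  induction i; intros H.
  - exists 0%Z. simpl. ring.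
  - destruct IHi as [z Hz]. { intros j Hj; apply H; lia. }
    destruct (u_dvd u Ha (S (pidx u g i)) n (H i ltac:(lia))) as [c Hc].
    exists (z + Z.of_nat (dig u g i * c))%Z. simpl PS. rewrite plus_IZR, <- INR_IZR_INZ.
    rewrite Rmult_plus_distr_l, Hz. rewrite Hc, !mult_INR.
    pose proof (u_pos u Ha (S (pidx u g i))).
    assert (0 < INR (u (S (pidx u g i)))) by (apply lt_0_INR; lia). field. lra.
Qed.

Lemma find_i g n : exists i, (forall j, (j < i)%nat -> (S (pidx u g j) <= n)%nat) /\ (n <= pidx u g i)%nat.
Proof.
  assert (forall i n, (n <= pidx u g i)%nat -> exists i0, (forall j, (j < i0)%nat -> (S (pidx u g j) <= n)%nat) /\ (n <= pidx u g i0)%nat).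
  { induction i; intros m Hm.
    - exists 0%nat. split; [intros; lia| auto].
    - destruct (Compare_dec.le_lt_dec m (pidx u g i)) as [H|H]; [apply IHi; auto|].
      exists (S i). split; auto. intros j Hj. pose proof (pidx_mono g j i ltac:(lia)). lia. }
  apply (H n). apply pidx_ge.
Qed.

Lemma tnorm_at g n i delta : (forall j, (j < i)%nat -> (S (pidx u g j) <= n)%nat) -> (n <= pidx u g i)%nat ->
  (forall j, (i <= j)%nat -> rr u g j <= delta) -> 0 <= delta ->
  tnorm (INR (u n) * xval g) <= 2 * delta.
Proof.
  intros H1 H2 Hr Hd. destruct (PS_int g n i H1) as [z Hz].
  replace (INR (u n) * xval g) with (IZR z + INR (u n) * (xval g - PS u g i)) by (rewrite <- Hz; ring).
  rewrite tnorm_shift. eapply Rle_trans; [apply tnorm_abs|].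
  pose proof (xval_ge g i). pose proof (pos_INR (u n)).
  assert (INR (u n) <= INR (u (pidx u g i))) by (apply le_INR, u_mono; auto).
  rewrite Rabs_right by nra. pose proof (tail_upper g i delta Hr Hd). nra.
Qed.

Lemma tnorm_lower g i : rr u g i <= tnorm (INR (u (pidx u g i)) * xval g).
Proof.
  assert (H1 : forall j, (j < i)%nat -> (S (pidx u g j) <= pidx u g i)%nat).
  { intros j Hj. pose proof (pidx_mono g (S j) i Hj). pose proof (pidx_step g j). lia. }
  destruct (PS_int g _ i H1) as [z Hz].
  replace (INR (u (pidx u g i)) * xval g) with (IZR z + INR (u (pidx u g i)) * (xval g - PS u g i)) by (rewrite <- Hz; ring).
  rewrite tnorm_shift. pose proof (tail_lower g i).
  pose proof (tail_upper g i (1/4) (fun j _ => rr_le_quarter g j) ltac:(lra)).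
  pose proof (rr_nonneg g i).
  rewrite tnorm_small; lra.
Qed.

Lemma xval_range g : 0 <= xval g < 1.
Proof.
  pose proof (xval_ge g 0). simpl in H. split; [lra|].
  assert (xval g <= 1/2) by (apply xval_le; apply PS_bound). lra.
Qed.

Definition xT g : Tpt := exist _ (xval g) (xval_range g).

Lemma agree_p f g J : (forall i, (i < J)%nat -> f i = g i) -> forall i, (i < J)%nat -> pidx u f i = pidx u g i.
Proof.
  intros H i. induction i; intros Hi; simpl.
  - rewrite H by lia. reflexivity.
  - rewrite IHi by lia. rewrite H by lia. reflexivity.
Qed.

Lemma agree_PS f g J : (forall i, (i < J)%nat -> f i = g i) -> forall j, (j <= J)%nat -> PS u f j = PS u g j.
Proof.
  intros H j. induction j; intros Hj; simpl; auto.
  rewrite IHj by lia. unfold dig, qq. rewrite (agree_p f g J H j) by lia. rewrite H by lia. reflexivity.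
Qed.

Lemma xval_near g J : PS u g J <= xval g <= PS u g J + / (2 * INR (S J)).
Proof.
  split; [apply xval_ge|].
  pose proof (tail_upper g J (1/4) (fun j _ => rr_le_quarter g j) ltac:(lra)).
  assert (INR (S J) <= INR (u (pidx u g J))).
  { apply le_INR. pose proof (pidx_ge g J). pose proof (u_ge u Ha (pidx u g J)). lia. }
  pose proof (pos_INR J). rewrite S_INR in *. 
  set (U := INR (u (pidx u g J))) in *.
  assert (xval g - PS u g J <= / (2 * U)).
  { apply Rmult_le_reg_l with U; [lra|]. replace (U * / (2 * U)) with (1/2) by (field; lra). lra. }
  assert (/ (2 * U) <= / (2 * (INR J + 1))) by (apply Rinv_le_contravar; lra). lra.
Qed.

Lemma xval_close f g J : (forall i, (i < J)%nat -> f i = g i) -> Rabs (xval f - xval g) <= / INR (S J).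
Proof.
  intros H. pose proof (agree_PS f g J H J (le_n _)).
  pose proof (xval_near f J). pose proof (xval_near g J).
  assert (/ (2 * INR (S J)) = / INR (S J) / 2).
  { rewrite S_INR. pose proof (pos_INR J). field. lra. }
  apply Rabs_le. lra.
Qed.

End Dig.

Definition chooseJ (X : (nat -> nat) -> Prop) (c : nat) (f : nat -> nat) : nat :=
  epsilon (inhabits 0%nat) (fun J => (c < J)%nat /\ forall g, (forall i, (i < J)%nat -> g i = f i) -> ~ X g).

Fixpoint stage (X : nat -> (nat -> nat) -> Prop) (k : nat) : nat * (nat -> nat) :=
  match k with
  | O => (0%nat, fun _ => 0%nat)
  | S k' => let cf := stage X k' in
            let c' := chooseJ (X k') (fst cf) (snd cf) in
            (c', fun i => if Nat.ltb i c' then snd cf i else S k')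
  end.

Definition cc X k := fst (stage X k).
Definition ff X k := snd (stage X k).

Lemma cc_S X k : cc X (S k) = chooseJ (X k) (cc X k) (ff X k).
Proof. reflexivity. Qed.

Lemma ff_S X k i : ff X (S k) i = if Nat.ltb i (cc X (S k)) then ff X k i else S k.
Proof. reflexivity. Qed.

Lemma ff_tail X k i : (cc X k <= i)%nat -> ff X k i = k.
Proof.
  destruct k; intros H; [reflexivity|]. rewrite ff_S.
  destruct (Nat.ltb_spec i (cc X (S k))); [lia|reflexivity].
Qed.

Section Stage.
Context (X : nat -> (nat -> nat) -> Prop)
  (Hex : forall k, exists J, (cc X k < J)%nat /\ forall g, (forall i, (i < J)%nat -> g i = ff X k i) -> ~ X k g).

Lemma cc_spec k : (cc X k < cc X (S k))%nat /\
  forall g, (forall i, (i < cc X (S k))%nat -> g i = ff X k i) -> ~ X k g.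
Proof. rewrite cc_S. unfold chooseJ. apply epsilon_spec with (P := fun J => (cc X k < J)%nat /\ _). apply Hex. Qed.

Lemma cc_ge k : (k <= cc X k)%nat.
Proof. induction k; [lia|]. pose proof (proj1 (cc_spec k)). lia. Qed.

Lemma cc_mono a b : (a <= b)%nat -> (cc X a <= cc X b)%nat.
Proof. intros H; induction H; [lia|]. pose proof (proj1 (cc_spec m)). lia. Qed.

Lemma ff_stable a b i : (i < cc X a)%nat -> (a <= b)%nat -> ff X b i = ff X a i.
Proof.
  intros Hi H. induction H; auto. rewrite ff_S.
  pose proof (cc_mono a (S m) ltac:(lia)).
  destruct (Nat.ltb_spec i (cc X (S m))); [auto|lia].
Qed.

Lemma ff_large k' k i : (k' <= k)%nat -> (cc X k' <= i)%nat -> (k' <= ff X k i)%nat.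
Proof.
  revert k'. induction k; intros k' H1 H2.
  - lia.
  - rewrite ff_S. destruct (Nat.ltb_spec i (cc X (S k))).
    + destruct (Nat.eq_dec k' (S k)); [subst; lia|]. apply IHk; lia.
    + lia.
Qed.

Definition kstar i := ff X (S i) i.

Lemma kstar_agree k i : (i < cc X (S k))%nat -> kstar i = ff X k i.
Proof.
  intros Hi. unfold kstar. pose proof (cc_ge (S i)).
  destruct (Compare_dec.le_lt_dec (S i) (S k)).
  - rewrite <- (ff_stable (S i) (S k) i) by lia. rewrite ff_S.
    destruct (Nat.ltb_spec i (cc X (S k))); [auto|lia].
  - rewrite (ff_stable (S k) (S i) i) by lia. rewrite ff_S.
    destruct (Nat.ltb_spec i (cc X (S k))); [auto|lia].
Qed.

Lemma kstar_large k i : (cc X k <= i)%nat -> (k <= kstar i)%nat.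
Proof. intros H. unfold kstar. pose proof (cc_ge k). apply ff_large; lia. Qed.

End Stage.

Theorem corollaryE (u : nat -> nat) :
  a_sequence u ->
  (forall M : nat, exists n : nat, (M < ratio u n)%nat) ->
  ~ T_Fsigma (s_u u).
Proof.
  intros Ha Hu [F [HFc HFs]].
  set (X := fun k g => F k (xT u Ha Hu g)).
  assert (Hex : forall k, exists J, (cc X k < J)%nat /\ forall g, (forall i, (i < J)%nat -> g i = ff X k i) -> ~ X k g).
  { intros k. set (f := ff X k). set (c := cc X k).
    assert (Hf : forall i, (c <= i)%nat -> f i = k) by (intros; apply ff_tail; auto).
    assert (Hns : ~ s_u u (xT u Ha Hu f)).
    { intros Hs. assert (He : 0 < / (8 * (INR k + 1))).
      { apply Rinv_0_lt_compat. pose proof (pos_INR k). lra. }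
      destruct (Hs _ He) as [N HN]. set (i := Nat.max N c).
      pose proof (pidx_ge u Ha Hu f i).
      specialize (HN (pidx u f i) ltac:(unfold i in *; lia)). simpl in HN.
      pose proof (tnorm_lower u Ha Hu f i). pose proof (rr_lower u Ha Hu f i).
      rewrite (Hf i) in H1 by (unfold i; lia). lra. }
    assert (HnF : ~ F k (xT u Ha Hu f)) by (intros HF; apply Hns, HFs; eauto).
    assert (Heps : exists eps, 0 < eps /\ forall y, F k y -> eps <= Tdist (xT u Ha Hu f) y).
    { apply NNPP. intros Hn. apply HnF. apply HFc. intros eps Heps.
      apply NNPP. intros Hn2. apply Hn. exists eps. split; auto. intros y Fy.
      destruct (Rlt_le_dec (Tdist (xT u Ha Hu f) y) eps) as [Hlt|Hle]; auto.
      exfalso. apply Hn2. eauto. }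
    destruct Heps as [eps [Heps Hy]].
    destruct (archimed_cor1 eps Heps) as [N0 [HN0 HN0p]].
    exists (S c + N0)%nat. split; [lia|]. intros g Hg HX.
    specialize (Hy _ HX). unfold Tdist in Hy. simpl in Hy.
    pose proof (tnorm_abs (xval u Ha Hu f - xval u Ha Hu g)).
    pose proof (xval_close u Ha Hu f g (S c + N0) ltac:(intros i Hi; symmetry; apply Hg; auto)).
    assert (/ INR (S (S c + N0)) <= / INR N0).
    { apply Rinv_le_contravar. apply lt_0_INR; lia. apply le_INR; lia. }
    lra. }
  set (ks := kstar X).
  assert (Hs : s_u u (xT u Ha Hu ks)).
  { intros eps Heps. destruct (archimed_cor1 eps Heps) as [k [Hk Hkp]].
    exists (S (pidx u ks (cc X k))). intros n Hn.
    destruct (find_i u Ha Hu ks n) as [i [Hi1 Hi2]].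
    assert (Hik : (cc X k < i)%nat).
    { destruct (Compare_dec.le_lt_dec i (cc X k)) as [H|H]; auto.
      pose proof (pidx_mono u Ha Hu ks i (cc X k) H). lia. }
    simpl. eapply Rle_lt_trans.
    - apply (tnorm_at u Ha Hu ks n i (/ (4 * (INR k + 1)))); auto.
      + intros j Hj. apply rr_le_k; auto. unfold ks. apply kstar_large; auto. lia.
      + left. apply Rinv_0_lt_compat. pose proof (pos_INR k). lra.
    - assert (0 < INR k) by (apply lt_0_INR; lia).
      assert (2 * / (4 * (INR k + 1)) <= / INR k).
      { replace (2 * / (4 * (INR k + 1))) with (/ (2 * (INR k + 1))) by (field; lra).
        apply Rinv_le_contravar; lra. }
      lra. }
  destruct (proj1 (HFs _) Hs) as [m Hm].
  pose proof (proj2 (cc_spec X Hex m) ks (fun i Hi => kstar_agree X Hex m i Hi)).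
  apply H. exact Hm.
Qed.
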